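(* There are absolute constants $c,C>0$ such that for every integer $d\ge 2$ there exist a set $\mathcal P$ of $n$ points and a set $\mathcal H$ of $m$ hyperplanes in $\mathbb R^d$ (with $n,m\ge 1$) satisfying \[\operatorname{I}(\mathcal P,\mathcal H)\ \ge\ c\,\frac{nm}{\sqrt d}\qquad\text{and}\qquad \operatorname{rs}(\mathcal P,\mathcal H)\ \le\ C\,\frac{mn\,2^{-d}}{\sqrt d}.\]
   Context: A point $p$ and a hyperplane $h$ are incident if $p\in h$. For a finite point set $\mathcal P$ and finite hyperplane set $\mathcal H$ in $\mathbb R^d$, $\operatorname{I}(\mathcal P,\mathcal H)$ is the number of incident pairs $(p,h)\in\mathcal P\times\mathcal H$, and $\operatorname{rs}(\mathcal P,\mathcal H)=\max_{S}\,|\{p\in\mathcal P: p\in S\}|\cdot|\{h\in\mathcal H: S\subseteq h\}|$, the maximum over all affine subspaces $S\subseteq\mathbb R^d$. *)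

(* Defs.v *)
From Stdlib Require Import Rdefinitions.
From HB Require Import structures.
From mathcomp Require Import all_boot all_order all_algebra.
From mathcomp Require Import boolp classical_sets.
From mathcomp Require Import Rstruct.
Set Implicit Arguments. Unset Strict Implicit. Unset Printing Implicit Defensive.
Import Order.TTheory GRing.Theory Num.Theory.
Local Open Scope ring_scope.
Local Open Scope classical_set_scope.

Definition on_hp (d : nat) (h : 'rV[R]_d * R) (x : 'rV[R]_d) : bool :=
  \sum_(i < d) h.1 0 i * x 0 i == h.2.

Definition hp_set (d : nat) (h : 'rV[R]_d * R) : set 'rV[R]_d :=
  [set x | on_hp h x].

Definition hyperplane_family (d : nat) (H : seq ('rV[R]_d * R)) : Prop :=
  (forall h, h \in H -> h.1 != 0) /\
  (forall i j : nat, (i < size H)%N -> (j < size H)%N -> i <> j ->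
     hp_set (nth (0, 0) H i) <> hp_set (nth (0, 0) H j)).

Definition affine_subspace (d : nat) (S : set 'rV[R]_d) : Prop :=
  exists (x0 : 'rV[R]_d) (U : 'M[R]_d), S = [set x : 'rV[R]_d | (x - x0 <= U)%MS].

Definition incidences (d : nat) (P : seq 'rV[R]_d) (H : seq ('rV[R]_d * R)) : nat :=
  \sum_(p <- P) count (fun h => on_hp h p) H.

Definition rs_value (d : nat) (P : seq 'rV[R]_d) (H : seq ('rV[R]_d * R))
  (S : set 'rV[R]_d) : nat :=
  (count (fun p => `[< S p >]) P * count (fun h => `[< S `<=` hp_set h >]) H)%N.

(* rs(P, H) <= X, i.e. the maximum over all affine subspaces S of
   rs_value P H S is at most X. (The empty subspace contributes 0.) *)
Definition rs_le (d : nat) (P : seq 'rV[R]_d) (H : seq ('rV[R]_d * R)) (X : R) : Prop :=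
  forall S, affine_subspace S -> (rs_value P H S)%:R <= X.

(* Main.v *)
Require Import Defs.
From Stdlib Require Import Rdefinitions.
From mathcomp Require Import all_boot all_order all_algebra.
From mathcomp Require Import Rstruct.
From mathcomp Require Import boolp classical_sets.
From mathcomp Require Import zify ring lra.
Set Implicit Arguments. Unset Strict Implicit. Unset Printing Implicit Defensive.
Import Order.TTheory GRing.Theory Num.Theory.
Local Open Scope ring_scope.

Definition sg (b : bool) : int := if b then 1 else -1.
Definition dotz (x y : seq bool) : int :=
  \sum_(i < size x) sg (nth false x i) * sg (nth false y i).
Lemma dotz_cons a x b y : dotz (a :: x) (b :: y) = sg a * sg b + dotz x y.
Proof. by rewrite /dotz /= big_ord_recl. Qed.

Fixpoint bseqs (d : nat) : seq (seq bool) :=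
  if d is d'.+1 then map (cons true) (bseqs d') ++ map (cons false) (bseqs d')
  else [:: [::]].

Lemma size_bseqs d : size (bseqs d) = (2 ^ d)%N.
Proof. by elim: d => //= d IH; rewrite size_cat !size_map IH expnS mul2n addnn. Qed.

Lemma bseqs_sz d s : s \in bseqs d -> size s = d.
Proof.
elim: d s => [|d IH] s /=; first by rewrite inE => /eqP->.
by rewrite mem_cat => /orP[] /mapP[t /IH <- ->].
Qed.

Lemma uniq_bseqs d : uniq (bseqs d).
Proof.
elim: d => //= d IH.
have i1 : injective (cons true) by move=> ? ? [].
have i2 : injective (cons false) by move=> ? ? [].
rewrite cat_uniq !map_inj_uniq // IH /= andbT.
by apply/hasPn => s /mapP[t _ ->]; apply/negP => /mapP[u _].
Qed.

Lemma sum_cst (T : Type) (r : seq T) (c : int) : \sum_(i <- r) c = c *+ size r.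
Proof. by elim: r => [|x r IH]; rewrite ?big_nil ?big_cons ?IH ?mulrS. Qed.

Lemma sum_sq d a : size a = d ->
  \sum_(s <- bseqs d) dotz a s ^+ 2 = (d * 2 ^ d)%N%:Z.
Proof.
elim: d a => [|d IH] [|a0 a] //=.
  by move=> _; rewrite big_seq1 /dotz big_ord0 expr0n.
move=> [sa].
rewrite big_cat !big_map /=.
rewrite -big_split /=.
under eq_bigr => s _ do rewrite !dotz_cons.
have -> : \sum_(i <- bseqs d) ((sg a0 * sg true + dotz a i) ^+ 2 + (sg a0 * sg false + dotz a i) ^+ 2)
   = \sum_(i <- bseqs d) (2 + 2 * dotz a i ^+ 2).
  by apply: eq_bigr => s _; case: a0 => /=; ring.
rewrite big_split /= -mulr_sumr IH // sum_cst size_bseqs.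
rewrite expnS; apply/eqP; rewrite -natz; lia.
Qed.

Lemma count_mul_le (T : Type) (B : seq T) (f : T -> int) (P : pred T) (c : int) :
  (forall s, P s -> c <= f s) -> (forall s, 0 <= f s) ->
  (count P B)%:Z * c <= \sum_(s <- B) f s.
Proof.
move=> hc hf; elim: B => [|s B IH]; first by rewrite big_nil mul0r.
rewrite big_cons /= PoszD mulrDl.
case: (boolP (P s)) => Ps /=.
  by rewrite mul1r; apply: lerD => //; apply: hc.
by rewrite mul0r add0r -[X in X <= _]add0r; apply: lerD.
Qed.

Lemma good_count d a T : size a = d -> (4 * d <= T.+1 ^ 2)%N -> (0 < d)%N ->
  (3 * 2 ^ d <= 4 * count (fun s => `|dotz a s| <= T)%N (bseqs d))%N.
Proof.
move=> sa h4 d0.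
set good := count _ _.
set bad := count (fun s => T < `|dotz a s|)%N (bseqs d).
have e : (good + bad = 2 ^ d)%N.
  rewrite -size_bseqs -(count_predC (fun s => `|dotz a s| <= T)%N).
  by congr (_ + _)%N; apply: eq_count => s /=; rewrite ltnNge.
have hb : (bad * T.+1 ^ 2 <= d * 2 ^ d)%N.
  rewrite -lez_nat PoszM -(sum_sq sa); apply: count_mul_le => [s /= hs|s]; last exact: sqr_ge0.
  have : (T.+1 <= `|dotz a s|)%N by [].
  rewrite -lez_nat abszE => h; rewrite -[dotz a s ^+ 2](real_normK (num_real _)).
  move: h; set u := `|dotz a s|; move=> h.
  have u0 : 0 <= u by apply: normr_ge0.
  rewrite -natz natrX natz; nia.
have h4' : (4 * d * bad <= d * 2 ^ d)%N.
  apply: leq_trans hb; rewrite mulnC leq_mul2l h4 orbT //.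
have : (4 * bad <= 2 ^ d)%N.
  move: h4'; set z := (2 ^ d)%N; clear -d0; nia.
lia.
Qed.
Lemma sg_sq b : sg b * sg b = 1. Proof. by case: b. Qed.

Lemma uniq_size1 (T : eqType) (X : seq T) z :
  uniq X -> {subset X <= pred1 z} -> (size X <= 1)%N.
Proof.
move=> uX sX; have := uniq_leq_size uX (s2 := [:: z]).
by apply=> x /sX; rewrite inE.
Qed.

Lemma key d : forall (X Y : seq (seq bool)), uniq X -> uniq Y ->
  {subset X <= [pred x | size x == d]} -> {subset Y <= [pred x | size x == d]} ->
  (forall x1 x2 y, x1 \in X -> x2 \in X -> y \in Y -> dotz y x1 = dotz y x2) ->
  (size X * size Y <= 2 ^ d)%N.
Proof.
elim: d => [|d IH] X Y uX uY sX sY H.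
  have hX : (size X <= 1)%N.
    by apply: (uniq_size1 (z := [::])) => // x /sX; rewrite !inE; case: x.
  have hY : (size Y <= 1)%N.
    by apply: (uniq_size1 (z := [::])) => // x /sY; rewrite !inE; case: x.
  by rewrite expn0; nia.
have sXc x : x \in X -> x = head false x :: behead x.
  by move/sX; case: x.
have sYc y : y \in Y -> y = head false y :: behead y.
  by move/sY; case: y.
have sXb x : x \in X -> size (behead x) == d.
  by move/sX; case: x => //= ? ? /eqP[->].
have sYb y : y \in Y -> size (behead y) == d.
  by move/sY; case: y => //= ? ? /eqP[->].
have dec y x : y \in Y -> x \in X ->
    dotz y x = sg (head false y) * sg (head false x) + dotz (behead y) (behead x).
  by move=> yY xX; rewrite {1}(sYc _ yY) {1}(sXc _ xX) dotz_cons.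
case: (boolP (has (head false) X && has (negb \o head false) X)).
- case/andP=> /hasP[x1 x1X hx1] /hasP[x2 x2X /= hx2].
  have injY : {in Y &, injective behead}.
    move=> y y' yY y'Y eb.
    rewrite (sYc _ yY) (sYc _ y'Y) eb; congr cons.
    have e1 := H x1 x2 y x1X x2X yY.
    have e2 := H x1 x2 y' x1X x2X y'Y.
    rewrite (dec y x1) // (dec y x2) // (dec y' x1) // (dec y' x2) // hx1 (negbTE hx2) /= eb in e1 e2.
    move: e1 e2; case: (head false y); case: (head false y') => //= e1 e2; lia.
  set XT := [seq behead x | x <- X & head false x].
  set XF := [seq behead x | x <- X & ~~ head false x].
  have hT : (size XT * size (map behead Y) <= 2 ^ d)%N.
    apply: IH.
    - rewrite map_inj_in_uniq ?filter_uniq // => x x' /[!mem_filter] /andP[hx xX] /andP[hx' x'X] e.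
      by rewrite (sXc _ xX) (sXc _ x'X) e hx hx'.
    - by rewrite map_inj_in_uniq.
    - by move=> z /mapP[x /[!mem_filter] /andP[_ xX] ->]; apply: sXb.
    - by move=> z /mapP[y yY ->]; apply: sYb.
    move=> z1 z2 w /mapP[x /[!mem_filter] /andP[hx xX] ->] /mapP[x' /[!mem_filter] /andP[hx' x'X] ->] /mapP[y yY ->].
    have := H x x' y xX x'X yY; rewrite (dec y x) // (dec y x') // hx hx'; by move/addrI.
  have hF : (size XF * size (map behead Y) <= 2 ^ d)%N.
    apply: IH.
    - rewrite map_inj_in_uniq ?filter_uniq // => x x' /[!mem_filter] /andP[hx xX] /andP[hx' x'X] e.
      by rewrite (sXc _ xX) (sXc _ x'X) e (negbTE hx) (negbTE hx').
    - by rewrite map_inj_in_uniq.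
    - by move=> z /mapP[x /[!mem_filter] /andP[_ xX] ->]; apply: sXb.
    - by move=> z /mapP[y yY ->]; apply: sYb.
    move=> z1 z2 w /mapP[x /[!mem_filter] /andP[hx xX] ->] /mapP[x' /[!mem_filter] /andP[hx' x'X] ->] /mapP[y yY ->].
    have := H x x' y xX x'X yY; rewrite (dec y x) // (dec y x') // (negbTE hx) (negbTE hx'); by move/addrI.
  have eX : size X = (size XT + size XF)%N.
    by rewrite !size_map !size_filter count_predC.
  rewrite size_map in hT hF; rewrite eX expnS; nia.
- move=> nb.
  case eX: X => [|x0 Xr]; first by rewrite mul0n.
  have x0X : x0 \in X by rewrite eX mem_head.
  have hall : forall x, x \in X -> head false x = head false x0.
    move=> x xX; apply/eqP; apply: contraNT nb => ne; apply/andP; split; apply/hasP.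
    + case: (boolP (head false x)) => hx; first by exists x.
      by exists x0 => //; move: ne; rewrite (negbTE hx); case: (head false x0).
    + case: (boolP (head false x)) => hx; last by exists x.
      by exists x0 => //=; move: ne; rewrite hx; case: (head false x0).
  rewrite -eX.
  set Y' := undup (map behead Y).
  have h1 : (size X * size Y' <= 2 ^ d)%N.
    have -> : size X = size (map behead X) by rewrite size_map.
    apply: IH.
    - rewrite map_inj_in_uniq // => x x' xX x'X e.
      by rewrite (sXc _ xX) (sXc _ x'X) e !hall.
    - exact: undup_uniq.
    - by move=> z /mapP[x xX ->]; apply: sXb.
    - by move=> z; rewrite mem_undup => /mapP[y yY ->]; apply: sYb.
    move=> z1 z2 w /mapP[x xX ->] /mapP[x' x'X ->]; rewrite mem_undup => /mapP[y yY ->].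
    have := H x x' y xX x'X yY; rewrite (dec y x) // (dec y x') // (hall x) // (hall x') //; by move/addrI.
  have h2 b : (size [seq y <- Y | head false y == b] <= size Y')%N.
    rewrite -(size_map behead); apply: uniq_leq_size.
      rewrite map_inj_in_uniq ?filter_uniq // => y y' /[!mem_filter] /andP[/eqP hy yY] /andP[/eqP hy' y'Y] e.
      by rewrite (sYc _ yY) (sYc _ y'Y) e hy hy'.
    by move=> z /mapP[y /[!mem_filter] /andP[_ yY] ->]; rewrite mem_undup map_f.
  have eY : size Y = (size [seq y <- Y | head false y == true] + size [seq y <- Y | head false y == false])%N.
    rewrite !size_filter -(count_predC (fun y => head false y == true)); congr (_ + _)%N.
    by apply: eq_count => y /=; case: (head false y).
  have := h2 true; have := h2 false; rewrite eY expnS; nia.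
Qed.
Definition vec d (s : seq bool) : 'rV[R]_d := \row_i (sg (nth false s i))%:~R.
Definition dotR d (a x : 'rV[R]_d) : R := \sum_(i < d) a 0 i * x 0 i.
Definition ev d (j : 'I_d) : 'rV[R]_d := \row_l ((l == j)%:R).

Lemma dotR_e d (a : 'rV[R]_d) j : dotR a (ev j) = a 0 j.
Proof.
rewrite /dotR (bigD1 j) //= big1 => [|l /negbTE ne]; by rewrite !mxE ?eqxx ?ne ?mulr1 ?mulr0 ?addr0.
Qed.
Lemma dotR_D d (a u v : 'rV[R]_d) : dotR a (u + v) = dotR a u + dotR a v.
Proof. by rewrite /dotR -big_split; apply: eq_bigr => i _; rewrite mxE mulrDr. Qed.
Lemma dotR_B d (a u v : 'rV[R]_d) : dotR a (u - v) = dotR a u - dotR a v.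
Proof. by rewrite /dotR -sumrB; apply: eq_bigr => i _; rewrite !mxE mulrBr. Qed.
Lemma dotR_Z d (a u : 'rV[R]_d) c : dotR a (c *: u) = c * dotR a u.
Proof. by rewrite /dotR mulr_sumr; apply: eq_bigr => i _; rewrite mxE mulrCA. Qed.

Lemma on_hp_vec d a s (k : int) : size a = d ->
  on_hp (vec d a, k%:~R) (vec d s) = (dotz a s == k).
Proof.
move=> sa; rewrite /on_hp /dotz sa /=.
under eq_bigr do rewrite !mxE -intrM.
by rewrite -rmorph_sum eqr_int.
Qed.

Lemma vec_inj d : {in bseqs d &, injective (vec d)}.
Proof.
move=> s t /bseqs_sz ss /bseqs_sz st e.
apply: (@eq_from_nth _ false); first by rewrite ss st.
move=> i; rewrite ss => ilt.
have := congr1 (fun M : 'rV[R]_d => M 0 (Ordinal ilt)) e; rewrite !mxE /= => /eqP.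
by rewrite eqr_int; case: (nth false s i); case: (nth false t i).
Qed.

Lemma sg_nz (b : bool) : (sg b)%:~R != 0 :> R.
Proof. by case: b; rewrite /= ?rmorphN ?rmorph1 ?oppr_eq0 oner_eq0. Qed.

Lemma hp_inj d' (a b : seq bool) (k l : int) :
  size a = d'.+1 -> size b = d'.+1 -> head false a -> head false b ->
  hp_set (vec d'.+1 a, k%:~R) = hp_set (vec d'.+1 b, l%:~R) -> a = b /\ k = l.
Proof.
move=> sa sb ha hb E.
have mem x : on_hp (vec d'.+1 a, k%:~R) x -> on_hp (vec d'.+1 b, l%:~R) x.
  by move=> h; have : hp_set (vec d'.+1 a, k%:~R) x by []; rewrite E.
have a0 : vec d'.+1 a 0 ord0 = 1 by rewrite mxE /=; case: (a) ha => //= -[].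
have b0 : vec d'.+1 b 0 ord0 = 1 by rewrite mxE /=; case: (b) hb => //= -[].
set p := (k%:~R : R) *: ev (@ord0 d').
have kl : k = l.
  have := mem p; rewrite /on_hp /= -/(dotR _ _) -/(dotR _ _) !dotR_Z !dotR_e a0 b0 !mulr1 eqxx.
  by move=> /(_ isT) /eqP /eqP; rewrite eqr_int => /eqP.
split=> //.
case: (boolP (all (fun i => nth false a i == nth false b i) (iota 0 d'.+1))) => [/allP al|].
  apply: (@eq_from_nth _ false); first by rewrite sa sb.
  by move=> i; rewrite sa => ilt; apply/eqP/al; rewrite mem_iota.
case/allPn => i /[!mem_iota] /andP[_ ilt] ne.
have i0 : i != 0%N.
  by apply: contraNneq ne => ->; move: ha hb; case: (a) => [|x ?]; case: (b) => [|y ?] //= -> ->.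
set j := Ordinal ilt.
set q := p + ev j - vec d'.+1 a 0 j *: ev ord0.
have := mem q; rewrite /on_hp /= -/(dotR _ _) -/(dotR _ _) !dotR_B !dotR_D !dotR_Z !dotR_e a0 b0.
rewrite !mulr1 -kl.
have -> : vec d'.+1 b 0 j = - vec d'.+1 a 0 j.
  rewrite !mxE -rmorphN /=; congr intr.
  by move: ne; case: (nth false a i); case: (nth false b i).
rewrite addrK eqxx => /(_ isT).
set z := vec d'.+1 a 0 j.
have : z != 0 by rewrite /z mxE sg_nz.
move=> zn /eqP h; exfalso; apply: (negP zn); apply/eqP; lra.
Qed.

Definition levels (T : nat) : seq int := [seq (i%:Z - T%:Z) | i <- iota 0 (2 * T).+1].
Definition Aseq d' := map (cons true) (bseqs d').
Definition Hs d' T : seq ('rV[R]_d'.+1 * R) :=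
  [seq (vec d'.+1 a, (k%:~R : R)) | a <- Aseq d', k <- levels T].
Definition Ps d : seq 'rV[R]_d := map (vec d) (bseqs d).

Lemma count_ap (A B C : Type) (f : A -> B -> C) (P : pred C) (s : seq A) (t : seq B) :
  count P [seq f x y | x <- s, y <- t] = (\sum_(x <- s) count (fun y => P (f x y)) t)%N.
Proof.
elim: s => [|x s IH]; first by rewrite big_nil.
by rewrite allpairs_cons count_cat big_cons IH count_map.
Qed.

Lemma sum_b (T : Type) (B : seq T) (P : pred T) : (\sum_(x <- B) (P x : nat))%N = count P B.
Proof. by elim: B => [|x B IH]; rewrite ?big_nil ?big_cons ?IH. Qed.

Lemma uniq_levels T : uniq (levels T).
Proof. by rewrite map_inj_uniq ?iota_uniq // => i j /addIr /eqP; rewrite eqz_nat => /eqP. Qed.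

Lemma mem_levels T (D : int) : (`|D| <= T)%N -> D \in levels T.
Proof.
move=> h; apply/mapP; exists (absz (D + T%:Z)).
  rewrite mem_iota add0n ltnS; lia.
have : 0 <= D + T%:Z by lia.
by move/gez0_abs => ->; rewrite addrK.
Qed.

Lemma Aseq_prop d' a : a \in Aseq d' -> size a = d'.+1 /\ head false a.
Proof. by case/mapP => s /bseqs_sz <- ->. Qed.

Lemma uniq_Aseq d' : uniq (Aseq d').
Proof. by rewrite map_inj_uniq ?uniq_bseqs // => ? ? []. Qed.

Lemma sumn_cst (T : Type) (r : seq T) (c : nat) : (\sum_(i <- r) c = c * size r)%N.
Proof. by elim: r => [|x r IH]; rewrite ?big_nil ?muln0 // big_cons IH mulnS. Qed.

Lemma leq_sum_in (T : eqType) (r : seq T) (E1 E2 : T -> nat) :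
  (forall i, i \in r -> E1 i <= E2 i)%N -> (\sum_(i <- r) E1 i <= \sum_(i <- r) E2 i)%N.
Proof.
move=> h; rewrite big_seq_cond [X in (_ <= X)%N]big_seq_cond.
by apply: leq_sum => i /andP[ir _]; apply: h.
Qed.

Lemma incid_bound d' T : (4 * d'.+1 <= T.+1 ^ 2)%N ->
  (3 * 2 ^ d'.+1 * 2 ^ d' <= 4 * incidences (Ps d'.+1) (Hs d' T))%N.
Proof.
move=> h4.
rewrite /incidences big_map.
have step x : (\sum_(a <- Aseq d') (`|dotz a x| <= T)%N
      <= count (fun h => on_hp h (vec d'.+1 x)) (Hs d' T))%N.
  rewrite /Hs count_ap; apply: leq_sum_in => a /Aseq_prop [sa _].
  case h: (absz (dotz a x) <= T)%N; last by [].
  rewrite (eq_count (a2 := fun k => dotz a x == k)); last by move=> k /=; rewrite on_hp_vec.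
  have : has (fun k => dotz a x == k) (levels T) by apply/hasP; exists (dotz a x) => //; apply: mem_levels.
  by rewrite has_count.
apply: (@leq_trans (4 * \sum_(x <- bseqs d'.+1) \sum_(a <- Aseq d') (`|dotz a x| <= T)%N)%N);
  last by rewrite leq_mul2l; apply/orP; right; apply: leq_sum => x _; apply: step.
rewrite exchange_big /= big_distrr /=.
apply: (@leq_trans (\sum_(a <- Aseq d') (3 * 2 ^ d'.+1))%N).
  by rewrite sumn_cst size_map size_bseqs.
apply: leq_sum_in => a /Aseq_prop [sa _].
rewrite sum_b; apply: good_count => //.
Qed.

Section RS.
Local Open Scope classical_set_scope.
Lemma rs_bound d' T (S : set 'rV[R]_d'.+1) :
  (rs_value (Ps d'.+1) (Hs d' T) S <= 2 ^ d'.+1)%N.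
Proof.
rewrite /rs_value.
set X := [seq x <- bseqs d'.+1 | `[< S (vec d'.+1 x) >]].
have eX : count (fun p => `[< S p >]) (Ps d'.+1) = size X by rewrite count_map size_filter.
set Y := [seq a <- Aseq d' | has (fun k : int => `[< S `<=` hp_set (vec d'.+1 a, k%:~R) >]) (levels T)].
rewrite eX.
case eX0: X => [|x0 Xr]; first by rewrite mul0n.
have x0X : x0 \in X by rewrite eX0 mem_head.
rewrite -eX0.
have Sx0 : S (vec d'.+1 x0) by move: x0X; rewrite mem_filter => /andP[/asboolP].
have hY : (count (fun h => `[< S `<=` hp_set h >]) (Hs d' T) <= size Y)%N.
  rewrite /Hs count_ap size_filter -sum_b.
  apply: leq_sum_in => a /Aseq_prop [sa _].
  rewrite (eq_count (a2 := fun k : int => `[< S `<=` hp_set (vec d'.+1 a, k%:~R) >])) //.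
  case: (boolP (has _ _)) => hh; last first.
    by move: hh; rewrite has_count lt0n negbK => /eqP ->.
  apply: (@leq_trans (count (pred1 (dotz a x0)) (levels T))).
    apply: sub_count => k /= /asboolP sub.
    have := sub _ Sx0; rewrite /hp_set /= on_hp_vec // => /eqP ->; exact: eqxx.
  by rewrite count_uniq_mem ?uniq_levels // leq_b1.
apply: leq_trans (leq_mul (leqnn _) hY) _.
apply: key.
- by rewrite filter_uniq ?uniq_bseqs.
- by rewrite filter_uniq ?uniq_Aseq.
- by move=> x; rewrite mem_filter => /andP[_ /bseqs_sz sx]; rewrite inE sx.
- by move=> y; rewrite mem_filter => /andP[_ /Aseq_prop [sy _]]; rewrite inE sy.
move=> x1 x2 y; rewrite !mem_filter => /andP[/asboolP S1 _] /andP[/asboolP S2 _] /andP[/hasP[k _ /asboolP sub] /Aseq_prop [sy _]].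
have := sub _ S1; have := sub _ S2; rewrite /hp_set /= !on_hp_vec // => /eqP -> /eqP ->.
by [].
Qed.

End RS.

Lemma sqrt_bounds (x y : nat) : (x ^ 2 <= y)%N -> x%:R <= Num.sqrt (y%:R : R).
Proof.
move=> h; have -> : (x%:R : R) = Num.sqrt (x%:R ^+ 2).
  by rewrite sqrtr_sqr ger0_norm.
by rewrite ler_sqrt // -natrX ler_nat.
Qed.

Theorem theorem1p6 :
  exists c C : R, 0 < c /\ 0 < C /\
  forall d : nat, (2 <= d)%N ->
  exists (P : seq 'rV[R]_d) (H : seq ('rV[R]_d * R)),
    uniq P /\ hyperplane_family H /\
    (0 < size P)%N /\ (0 < size H)%N /\
    c * (size P * size H)%:R / Num.sqrt d%:R <= (incidences P H)%:R /\
    rs_le P H (C * (size H * size P)%:R * 2 ^- d / Num.sqrt d%:R).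
Proof.
exists (1/10), 1; split; first lra; split; first lra.
case=> [|d'] hd //.
pose s := Nat.sqrt d'.+1.
have /andP[hs1 hs2] : (s * s <= d'.+1 < s.+1 * s.+1)%N.
  by have := Nat.sqrt_spec d'.+1 (Nat.le_0_l _); rewrite -/s; lia.
have s1 : (1 <= s)%N by nia.
pose T := (2 * s).+1.
pose L := (2 * T).+1.
have h4 : (4 * d'.+1 <= T.+1 ^ 2)%N by rewrite /T; nia.
have hL1 : (L ^ 2 <= 49 * d'.+1)%N by rewrite /L /T; nia.
have hL2 : (4 * d'.+1 <= L ^ 2)%N by rewrite /L /T; nia.
exists (Ps d'.+1), (Hs d' T).
have sP : size (Ps d'.+1) = (2 ^ d'.+1)%N by rewrite size_map size_bseqs.
have sH : size (Hs d' T) = (2 ^ d' * L)%N.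
  by rewrite size_allpairs size_map size_bseqs size_map size_iota.
have memH h : h \in Hs d' T -> exists a k,
    [/\ a \in Aseq d', k \in levels T & h = (vec d'.+1 a, k%:~R)].
  by case/allpairsP => -[a k] /= [? ? ->]; exists a, k.
have hinj a a' k k' : a \in Aseq d' -> a' \in Aseq d' ->
    hp_set (vec d'.+1 a, k%:~R) = hp_set (vec d'.+1 a', k'%:~R) -> a = a' /\ k = k'.
  by move=> /Aseq_prop [sa ha] /Aseq_prop [sa' ha']; apply: hp_inj.
have uH : uniq (Hs d' T).
  apply: allpairs_uniq; [exact: uniq_Aseq | exact: uniq_levels |].
  move=> [a k] [a' k'] h1 h2 /= e.
  case/allpairsP: h1 => -[x y] /= [xA _ [ex ey]].
  case/allpairsP: h2 => -[x' y'] /= [x'A _ [ex' ey']].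
  subst.
  have [-> ->] : x = x' /\ y = y'.
    by apply: hinj => //; case: e => -> ->.
  by [].
split; first by rewrite map_inj_in_uniq ?uniq_bseqs //; apply: vec_inj.
split.
  split.
    move=> h /memH [a [k [aA _ ->]]] /=; apply/eqP.
    move=> /(congr1 (fun M : 'rV[R]_d'.+1 => M 0 ord0)); rewrite !mxE => /eqP.
    by apply/negP; apply: sg_nz.
  move=> i j ilt jlt ij E.
  have := nth_uniq (0, 0) ilt jlt uH.
  have [a [k [aA _ ea]]] := memH _ (mem_nth (0, 0) ilt).
  have [a' [k' [a'A _ ea']]] := memH _ (mem_nth (0, 0) jlt).
  move: E; rewrite ea ea' => E.
  have [-> ->] := hinj a a' k k' aA a'A E.
  by rewrite eqxx => /esym /eqP.
split; first by rewrite sP expn_gt0.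
split; first by rewrite sH muln_gt0 expn_gt0.
set q := Num.sqrt (d'.+1%:R : R).
have q0 : 0 < q by rewrite sqrtr_gt0 ltr0n.
have qL : (L%:R : R) <= 7 * q.
  have -> : 7 * q = Num.sqrt ((49 * d'.+1)%N%:R).
    by rewrite natrM sqrtrM // (_ : 49%:R = 7%:R ^+ 2) ?sqrtr_sqr ?ger0_norm // -natrX.
  exact: sqrt_bounds.
have Lq : 2 * q <= (L%:R : R).
  have -> : 2 * q = Num.sqrt ((4 * d'.+1)%N%:R).
    by rewrite natrM sqrtrM // (_ : 4%:R = 2%:R ^+ 2) ?sqrtr_sqr ?ger0_norm // -natrX.
  have -> : (L%:R : R) = Num.sqrt (L%:R ^+ 2) by rewrite sqrtr_sqr ger0_norm.
  by rewrite ler_sqrt -?natrX ?ler0n // ler_nat.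
split.
  have I4 := incid_bound h4.
  rewrite sP sH ler_pdivrMr //.
  have I4R : (3 * 2 ^ d'.+1 * 2 ^ d')%N%:R <= (4 * incidences (Ps d'.+1) (Hs d' T))%N%:R :> R.
    by rewrite ler_nat.
  move: I4R; rewrite !natrM.
  set N1 := (2 ^ d'.+1)%N%:R; set N2 := (2 ^ d')%N%:R; set I := (incidences _ _)%:R.
  have N10 : 0 <= N1 by []. have N20 : 0 <= N2 by [].
  move=> hI.
  have M0 : 0 <= N1 * N2 by apply: mulr_ge0.
  have I0 : 0 <= I by apply: ler0n.
  have h1 : N1 * N2 * L%:R <= N1 * N2 * (7 * q) by apply: ler_wpM2l.
  have h2 : 3 * N1 * N2 * q <= 4 * I * q by apply: ler_wpM2r => //; apply: ltW.
  have h3 : 0 <= I * q by apply: mulr_ge0 => //; apply: ltW.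
  rewrite mulrA; lra.
move=> S _.
have hr := rs_bound T S.
set r := (rs_value _ _ _)%:R.
rewrite sH sP !RdivE !RmultE mul1r !natrM !natrX mulfK; last by rewrite expf_neq0 // pnatr_eq0.
rewrite ler_pdivlMr //.
have hr' : r <= 2 * (2%:R : R) ^+ d' by rewrite /r -exprS -natrX ler_nat.
set N2 := (2%:R : R) ^+ d'.
have N20 : 0 <= N2 by rewrite /N2 exprn_ge0 // ler0n.
have h1 : r * q <= 2 * N2 * q by apply: ler_wpM2r => //; apply: ltW.
have h2 : N2 * (2 * q) <= N2 * L%:R by apply: ler_wpM2l.
lra.
Qed.
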